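(* Let $\mathbf{B}$ be a binomial ring and $n\ge0$. The Ariadne functor $A_n\colon\mathfrak{Laby}\to\mathfrak{MSet}_n$ factors through the quotient category $\mathfrak{Laby}_n$, producing a functor $A_n\colon\mathfrak{Laby}_n\to\mathfrak{MSet}_n$.
   Context: Binomial ring: commutative unital, torsion-free as an abelian group, with $\binom ak=a(a-1)\cdots(a-k+1)/k!\in\mathbf{B}$ for all $a\in\mathbf{B}$, $k\ge0$. Multi-sets, multations, $\mathfrak{MSet}_n$: a multi-set is a finite set with positive integer multiplicities, $|A|$ the sum of multiplicities. A multation $\mu\colon A\to B$ ($|A|=|B|=n$) is a multi-set of pairs with first-coordinate multi-set $A$ and second-coordinate multi-set $B$. $\mathfrak{MSet}_n$ has objects formal direct sums of multi-sets of cardinality $n$, morphisms the free $\mathbf{B}$-modules on multations, composition $\mu\circ\nu=\sum_K\frac{\prod_{(a,c)}m_{K_{13}}(a,c)!}{\prod m_K(a,b,c)!}K_{13}$ over multi-sets of triples $K$ with $(1,2)$-projection $\nu$ and $(2,3)$-projection $\mu$. $\prod_j[a_j;b_j]^{[m_j]}$ (distinct pairs) is the multation with $(a_j,b_j)$ of multiplicity $m_j$, with $[a;b]^{[i]}[a;b]^{[j]}=\binom{i+j}i[a;b]^{[i+j]}$. Mazes, $\mathfrak{Laby}$: a passage $p\colon x\to y$ carries label $\overline p\in\mathbf{B}$; a maze $P\colon X\to Y$ between finite sets is a finite multi-set of passages with every element of $X$ a source and of $Y$ a target; $|P|$ is its number of passages with multiplicity. $\mathfrak{Laby}$: objects formal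 finite direct sums of finite sets; morphisms generated by mazes modulo $P\cup\{x\xrightarrow0y\}=0$ and $P\cup\{x\xrightarrow{a+b}y\}=P\cup\{x\xrightarrow ay\}+P\cup\{x\xrightarrow by\}+P\cup\{x\xrightarrow ay,x\xrightarrow by\}$; composition $P\circ Q=\sum_{U\sqsubseteq P\boxtimes Q}U$ ($U$ a sub-multi-set of composable pairs using every passage occurrence of $P$ and $Q$, read as the maze with passages $x\xrightarrow{\overline p\overline q}z$). $\mathfrak{Laby}_n$ is the quotient of $\mathfrak{Laby}$ by (III) $P=0$ whenever $|P|>n$ and (IV) $P=\sum_d\prod_p\binom{\overline p}{d_p}I_d$, $d$ ranging over assignments of integers $d_p\ge1$ to the passage occurrences $p$ of $P$, $I_d$ the maze with $d_p$ passages from the source to the target of $p$ labelled $1$. Ariadne functor: $A_n(X)=\bigoplus_AA$ over multi-sets $A$ with support exactly $X$ and $|A|=n$; for a maze $P$ with passage occurrences $p\colon x_p\to y_p$, $A_n(P)=\sum_d\prod_p\overline p^{\,d_p}[x_p;y_p]^{[d_p]}$ over $d_p\ge1$ with $\sum d_p=n$. *)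

(* Defs.v *)
From HB Require Import structures.
From mathcomp Require Import all_boot all_order all_algebra.
Set Implicit Arguments. Unset Strict Implicit. Unset Printing Implicit Defensive.
Import Order.TTheory GRing.Theory.
Local Open Scope ring_scope.

Definition torsion_free (R : comPzRingType) : Prop :=
  forall (x : R) (k : nat), x *+ k.+1 = 0 -> x = 0.

(* [bn a k] is the binomial coefficient  a(a-1)...(a-k+1)/k!  in R:
   k! * bn a k = a(a-1)...(a-k+1).  In a torsion-free ring it is unique. *)
Definition binomial_fun (R : comPzRingType) (bn : R -> nat -> R) : Prop :=
  forall (a : R) (k : nat), bn a k *+ k`! = \prod_(i < k) (a - i%:R).

(* A multation between multi-sets over X and Y is a multi-set of pairs,
   i.e. a multiplicity function on X * Y (source/target multi-sets are its
   two projections). *)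
Definition multation (X Y : finType) := {ffun X * Y -> nat}.

(* Product of divided powers  prod_j [a_j; b_j]^[d_j]  following the rule
   [a;b]^[i] [a;b]^[j] = C(i+j, i) [a;b]^[i+j]  (pairs for distinct (a,b)
   just multiply into the multation with the union of pairs). *)
Definition dpow_step (X Y : finType) (e : X * Y * nat)
    (cm : nat * multation X Y) : nat * multation X Y :=
  let: (xy, d) := e in
  let: (c, M) := cm in
  (c * 'C(M xy + d, d), [ffun z => M z + (if z == xy then d else 0)]).

Definition dpow_prod (X Y : finType) (s : seq (X * Y * nat))
    : nat * multation X Y :=
  foldr (@dpow_step X Y) (1, [ffun => 0]) s.

(* A maze X -> Y is a finite multi-set of passages (x, y, label); we list its
   passage occurrences. *)
Definition maze (X Y : finType) (R : Type) := seq (X * Y * R).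

Definition is_maze (X Y : finType) (R : Type) (P : maze X Y R) : Prop :=
  (forall x : X, x \in map (fun q => q.1.1) P) /\
  (forall y : Y, y \in map (fun q => q.1.2) P).

Definition pass (X Y : finType) (R : Type) (P : maze X Y R) (p : 'I_(size P)) :
    X * Y * R := tnth (in_tuple P) p.

Definition pend (X Y : finType) (R : Type) (P : maze X Y R) (p : 'I_(size P)) : X * Y :=
  (pass p).1.
Definition plab (X Y : finType) (R : Type) (P : maze X Y R) (p : 'I_(size P)) : R :=
  (pass p).2.

Definition assign (X Y : finType) (R : Type) (P : maze X Y R) (n : nat) :=
  {ffun 'I_(size P) -> 'I_n.+1}.

Definition pos_assign (X Y : finType) (R : Type) (P : maze X Y R) (n : nat)
   (d : assign P n) : bool := [forall p, (0 < d p)%N].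

(* A_n(P) = sum_{d_p >= 1, sum d_p = n} prod_p lab_p^{d_p} [x_p;y_p]^[d_p],
   given as its coefficient function on multations. *)
Definition Ariadne (R : comPzRingType) (n : nat) (X Y : finType)
    (P : maze X Y R) (M : multation X Y) : R :=
  \sum_(d : assign P n | pos_assign d && (\sum_p (d p : nat) == n)%N)
     (\prod_p plab p ^+ d p) *
     (let cm := dpow_prod [seq (pend p, (d p : nat)) | p <- enum 'I_(size P)] in
      if cm.2 == M then (cm.1)%:R else 0).

Definition Imaze (R : comPzRingType) (X Y : finType) (P : maze X Y R) (n : nat)
    (d : assign P n) : maze X Y R :=
  flatten [seq nseq (d p) (pend p, 1) | p <- enum 'I_(size P)].

(* Main.v *)
Require Import Defs.
From mathcomp Require Import all_boot all_order all_algebra.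
From mathcomp Require Import zify ring.
Import GRing.Theory.
Local Open Scope ring_scope.


Fixpoint Sn (m d : nat) : nat :=
  if d is d'.+1 then (\sum_(1 <= j < m.+1) 'C(m, j) * Sn (m - j) d')%N
  else (m == 0)%N.

Lemma Sn0d d : Sn 0 d.+1 = 0%N.
Proof. by rewrite /= big_geq. Qed.

Lemma Sn_big m d : (m < d)%N -> Sn m d = 0%N.
Proof.
elim: d m => [|d IH] m //= Hm.
rewrite big_nat_cond big1 // => j /andP[/andP[H1 H2] _].
rewrite IH ?muln0 //; lia.
Qed.

Lemma SnS' m e : Sn m e.+1 = (\sum_(1 <= j < m.+1) 'C(m, j) * Sn (m - j) e)%N.
Proof. by []. Qed.

Lemma SnS m e : Sn m e.+1 = (\sum_(0 <= i < m) 'C(m, i.+1) * Sn (m - i.+1) e)%N.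
Proof. by rewrite /= big_add1. Qed.

Lemma Sn_rec d m : Sn m.+1 d = (d * (Sn m d + Sn m d.-1))%N.
Proof.
elim: d m => [|d IH] m; first by [].
change (Sn m.+1 d.+1 = d.+1 * (Sn m d.+1 + Sn m d))%N.
rewrite SnS.
under eq_bigr => i _ do rewrite subSS binS mulnDl.
rewrite big_split /= [X in (_ + X)%N]big_nat_recl // bin0 mul1n subn0 -SnS.
rewrite [X in (X + _)%N]big_nat_recr //= bin_small // mul0n addn0 -SnS'.
have -> : (\sum_(0 <= i < m) 'C(m, i.+1) * Sn (m - i) d =
   d * (Sn m d.+1 + \sum_(0 <= i < m) 'C(m, i.+1) * Sn (m - i.+1) d.-1))%N.
  rewrite SnS mulnDr !big_distrr /= -big_split /=.
  rewrite big_nat_cond [RHS]big_nat_cond; apply: eq_bigr => i /andP[/andP[_ Hi] _].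
  have -> : (m - i = (m - i.+1).+1)%N by lia.
  by rewrite IH mulnDr mulnDr !mulnA (mulnC 'C(m, i.+1)).
case: d IH => [|d] IH; first by rewrite mul0n mul1n add0n addnC.
rewrite -[d.+1.-1]/(d) -SnS; lia.
Qed.


Lemma bn0 (R : comPzRingType) (bn : R -> nat -> R) (Hbn : binomial_fun bn) a :
  bn a 0 = 1.
Proof. by have := Hbn a 0; rewrite big_ord0 /= mulr1n. Qed.

Lemma tf_mul (R : comPzRingType) (Htf : torsion_free R) (x : R) k :
  (0 < k)%N -> x * k%:R = 0 -> x = 0.
Proof. by case: k => // k _; rewrite mulr_natr => /Htf. Qed.

Lemma bn_rec (R : comPzRingType) (bn : R -> nat -> R) (Htf : torsion_free R)
  (Hbn : binomial_fun bn) a d :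
  a * bn a d = bn a d.+1 * d.+1%:R + bn a d * d%:R.
Proof.
apply/eqP; rewrite -subr_eq0; apply/eqP.
apply: (@tf_mul _ Htf _ (d.+1)`!); first exact: fact_gt0.
have H1 := Hbn a d; have H2 := Hbn a d.+1.
rewrite -mulr_natr in H1; rewrite -mulr_natr big_ord_recr /= -H1 in H2.
rewrite factS natrM.
have -> : (a * bn a d - (bn a d.+1 * d.+1%:R + bn a d * d%:R)) * (d.+1%:R * d`!%:R)
  = a * (bn a d * d`!%:R) * d.+1%:R - bn a d.+1 * (d.+1%:R * d`!%:R) * d.+1%:R
    - (bn a d * d`!%:R) * d%:R * d.+1%:R by ring.
rewrite -natrM -factS H2; ring.
Qed.

Lemma ident (R : comPzRingType) (bn : R -> nat -> R) (Htf : torsion_free R)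
  (Hbn : binomial_fun bn) a N m : (m <= N)%N ->
  \sum_(d < N.+1) bn a d * (Sn m d)%:R = a ^+ m.
Proof.
elim: m => [|m IH] Hm.
  rewrite big_ord_recl /= bn0 // mulr1 big1 ?addr0 // => i _.
  by rewrite big_geq // mulr0.
have E : forall d, bn a d * (Sn m.+1 d)%:R =
   bn a d * (d%:R * (Sn m d)%:R) + bn a d * (d%:R * (Sn m d.-1)%:R).
  by move=> d; rewrite Sn_rec natrM natrD; ring.
under eq_bigr => d _ do rewrite E.
rewrite big_split /= [X in _ + X]big_ord_recl /= mul0r mulr0 add0r.
have -> : \sum_(i < N) bn a (lift ord0 i) * ((lift ord0 i)%:R * (Sn m (lift ord0 i).-1)%:R)
   = \sum_(i < N.+1) bn a i.+1 * (i.+1%:R * (Sn m i)%:R).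
  rewrite big_ord_recr /= Sn_big ?mulr0 ?addr0 //.
rewrite -big_split /= exprS -(IH (ltnW Hm)) big_distrr /=.
apply: eq_bigr => i _; rewrite [RHS]mulrA (@bn_rec _ _ Htf Hbn); ring.
Qed.


Lemma binmul c j k : ('C(c, j) * 'C(c - j, k) = 'C(c, j + k) * 'C(j + k, j))%N.
Proof.
case: (leqP (j + k) c) => H; last first.
  rewrite [X in (_ = X * _)%N]bin_small //.
  case: (leqP j c) => Hj; last by rewrite bin_small.
  by rewrite [X in (_ * X)%N]bin_small ?muln0 //; lia.
apply/eqP; rewrite -(eqn_pmul2r (fact_gt0 j)) -(eqn_pmul2r (fact_gt0 k))
  -(eqn_pmul2r (fact_gt0 (c - j - k))); apply/eqP.
have E1 := bin_fact (_ : (j <= c)%N); have E2 := bin_fact (_ : (k <= c - j)%N).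
have E3 := bin_fact H; have E4 := bin_fact (leq_addr k j).
have -> : ('C(c, j) * 'C(c - j, k) * j`! * k`! * (c - j - k)`! =
   'C(c, j) * (j`! * ('C(c - j, k) * (k`! * (c - j - k)`!))))%N by ring.
rewrite E2 ?E1; [|lia|lia].
have -> : ('C(c, j + k) * 'C(j + k, j) * j`! * k`! * (c - j - k)`! =
   'C(c, j + k) * ('C(j + k, j) * (j`! * (j + k - j)`!)) * (c - (j + k))`!)%N.
  have -> : (j + k - j = k)%N by lia.
  have -> : (c - (j + k) = c - j - k)%N by lia.
  ring.
by rewrite E4 -mulnA E3.
Qed.

Lemma big_range (R : nmodType) (F : nat -> R) a b N : (a <= b)%N -> (b <= N)%N ->
  \sum_(a <= j < b) F j = \sum_(j < N | (a <= j)%N && (j < b)%N) F j.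
Proof.
move=> Hab HbN.
rewrite -(big_mkord (fun j => (a <= j)%N && (j < b)%N)) (@big_cat_nat _ _ _ a 0 N) //; last by lia.
rewrite (@big_cat_nat _ _ _ b a N) //=.
have E0 : \sum_(0 <= i < a | (a <= i < b)%N) F i = 0.
  rewrite big_nat_cond big1 // => i /andP[/andP[_ H] /andP[H' _]]; lia.
have E1 : \sum_(b <= i < N | (a <= i < b)%N) F i = 0.
  rewrite big_nat_cond big1 // => i /andP[/andP[H _] /andP[_ H']]; lia.
rewrite E0 E1 add0r addr0 [RHS]big_nat_cond [LHS]big_nat_cond; apply: eq_bigl => i.
by case: (a <= i)%N; case: (i < b)%N.
Qed.

Lemma conv (R : comPzRingType) (G : nat -> R) n c d : (c <= n)%N ->
 \sum_(j < n.+1 | (0 < j)%N) ('C(c, j))%:R *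
     \sum_(k < n.+1) (Sn k d)%:R * ('C(c - j, k))%:R * G (j + k)%N
 = \sum_(m < n.+1) (Sn m d.+1)%:R * ('C(c, m))%:R * G m.
Proof.
move=> Hc.
pose F j m := ('C(c, m) * 'C(m, j) * Sn (m - j) d)%:R * G m.
have L : forall j : 'I_n.+1, ('C(c, j))%:R *
     \sum_(k < n.+1) (Sn k d)%:R * ('C(c - j, k))%:R * G (j + k)%N
   = \sum_(m < n.+1 | (j <= m)%N && (m < n.+1)%N) F j m.
  move=> j; rewrite big_distrr /=.
  transitivity (\sum_(k < n.+1) F j (j + k)%N).
    apply: eq_bigr => k _; rewrite /F.
    have -> : (j + k - j = k)%N by lia.
    rewrite -binmul !natrM; ring.
  rewrite -(big_mkord xpredT (fun k => F j (j + k)%N)).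
  rewrite (@big_cat_nat _ _ _ (n.+1 - j) 0 n.+1) //=; last by lia.
  rewrite [X in _ + X]big_nat_cond [X in _ + X]big1 ?addr0; last first.
    move=> k /andP[/andP[Hk _] _]; rewrite /F bin_small ?mul0n ?mul0r //.
    have := ltn_ord j; lia.
  rewrite -(@big_range _ (F j) j n.+1 n.+1 (ltnW (ltn_ord j)) (leqnn _)).
  rewrite (big_addn 0 n.+1 j); apply: eq_bigr => i _; by rewrite addnC.
rewrite (eq_bigr _ (fun j _ => L j)).
transitivity (\sum_(m < n.+1) \sum_(j < n.+1 | (1 <= j)%N && (j < m.+1)%N) F j m); last first.
  apply: eq_bigr => m _.
  rewrite SnS' natr_sum (@big_range _ _ 1 m.+1 n.+1 _ (ltn_ord m)) //.
  rewrite !big_distrl; apply: eq_bigr => j _; rewrite /F !natrM /=; ring.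
rewrite [RHS](eq_bigr (fun m : 'I_n.+1 => \sum_(j < n.+1)
   (if (1 <= j)%N && (j < m.+1)%N then F j m else 0))); last by move=> m _; rewrite big_mkcond.
rewrite exchange_big /= big_mkcond; apply: eq_bigr => j _.
case: (posnP j) => Hj /=.
  by rewrite big1 // => m _; rewrite Hj.
rewrite big_mkcond; apply: eq_bigr => m _; have := ltn_ord m.
case: (leqP j m) => H1 /= H2.
  by rewrite H2 ltnS H1.
by rewrite ltnS leqNgt H1.
Qed.

Set Implicit Arguments. Unset Strict Implicit. Unset Printing Implicit Defensive.

Definition msub (X Y : finType) (M : multation X Y) (xy : X * Y) (k : nat) : multation X Y :=
  [ffun z => (M z - (if z == xy then k else 0))%N].

Lemma msub0 (X Y : finType) (M : multation X Y) xy : msub M xy 0 = M.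
Proof. by apply/ffunP => z; rewrite ffunE; case: ifP; rewrite subn0. Qed.

Lemma msubE (X Y : finType) (M : multation X Y) xy k : msub M xy k xy = (M xy - k)%N.
Proof. by rewrite ffunE eqxx. Qed.

Lemma msubD (X Y : finType) (M : multation X Y) xy j k :
  msub (msub M xy j) xy k = msub M xy (j + k).
Proof. by apply/ffunP => z; rewrite !ffunE; case: ifP; rewrite ?subnDA ?subn0. Qed.

Lemma msub_le (X Y : finType) (M : multation X Y) xy k n :
  (forall z, (M z <= n)%N) -> forall z, (msub M xy k z <= n)%N.
Proof. by move=> H z; rewrite ffunE; apply: leq_trans (leq_subr _ _) (H z). Qed.

Fixpoint Bf (R : comPzRingType) (X Y : finType) (n : nat) (s : seq (X * Y * R))
    (M : multation X Y) : R :=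
  if s is t :: s' then
    \sum_(k < n.+1 | (0 < k)%N) t.2 ^+ k * ('C(M t.1, k))%:R * Bf n s' (msub M t.1 k)
  else (M == [ffun => 0%N])%:R.

Lemma block (R : comPzRingType) (X Y : finType) n d (xy : X * Y) (r : seq (X * Y * R))
  (M : multation X Y) : (forall z, (M z <= n)%N) ->
  Bf n (nseq d (xy, 1) ++ r) M =
  \sum_(k < n.+1) (Sn k d)%:R * ('C(M xy, k))%:R * Bf n r (msub M xy k).
Proof.
elim: d M => [|d IH] M HM.
  rewrite /= big_ord_recl /= msub0 bin0 !mul1r big1 ?addr0 //.
  by move=> i _; rewrite mul0r mul0r.
rewrite /=.
under eq_bigr => j _ do rewrite expr1n mul1r (IH _ (msub_le _ _ HM)) msubE.
under eq_bigr => j _ do under eq_bigr => k _ do rewrite msubD.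
under [RHS]eq_bigr => k _ do rewrite -SnS'.
exact: (@conv _ (fun m => Bf n r (msub M xy m)) n (M xy) d (HM xy)).
Qed.

Set Implicit Arguments. Unset Strict Implicit. Unset Printing Implicit Defensive.

Definition fcons (A : finType) k (a : A) (d : {ffun 'I_k -> A}) : {ffun 'I_k.+1 -> A} :=
  [ffun i => if unlift ord0 i is Some j then d j else a].
Definition ftail (A : finType) k (d : {ffun 'I_k.+1 -> A}) : {ffun 'I_k -> A} :=
  [ffun j => d (lift ord0 j)].

Lemma fcons0 (A : finType) k (a : A) (d : {ffun 'I_k -> A}) : fcons a d ord0 = a.
Proof. by rewrite ffunE unlift_none. Qed.
Lemma fconsS (A : finType) k (a : A) (d : {ffun 'I_k -> A}) j : fcons a d (lift ord0 j) = d j.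
Proof. by rewrite ffunE liftK. Qed.

Lemma sum_ffunS (R : nmodType) (A : finType) k (F : {ffun 'I_k.+1 -> A} -> R) :
  \sum_d F d = \sum_(a : A) \sum_(d : {ffun 'I_k -> A}) F (fcons a d).
Proof.
rewrite pair_big /=.
rewrite (reindex (fun p : A * {ffun 'I_k -> A} => fcons p.1 p.2)) //=.
apply: onW_bij; exists (fun d : {ffun 'I_k.+1 -> A} => (d ord0, ftail d)).
  move=> [a d] /=; rewrite fcons0; congr pair.
  by apply/ffunP => j; rewrite ffunE fconsS.
move=> d; apply/ffunP => i; rewrite ffunE /=.
by case: unliftP => [j|] ->; rewrite ?ffunE.
Qed.

Lemma sum_ffun0 (R : nmodType) (A : finType) (F : {ffun 'I_0 -> A} -> R) d0 :
  \sum_d F d = F d0.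
Proof.
rewrite (eq_bigl (pred1 d0)) ?big_pred1_eq // => d /=.
by symmetry; apply/eqP/ffunP => -[].
Qed.

Lemma pass0 (X Y : finType) (T : Type) (t : X * Y * T) (s : maze X Y T) :
  @pass _ _ _ (t :: s) ord0 = t.
Proof. by rewrite /pass (tnth_nth t). Qed.

Lemma passS (X Y : finType) (T : Type) (t : X * Y * T) (s : maze X Y T) (j : 'I_(size s)) :
  @pass _ _ _ (t :: s) (lift ord0 j) = pass j.
Proof. by rewrite /pass !(tnth_nth t). Qed.

Lemma pos_fcons (X Y : finType) (T : Type) (t : X * Y * T) (s : maze X Y T) n
   (a : 'I_n.+1) (d : assign s n) :
  @pos_assign _ _ _ (t :: s) n (fcons a d) = (0 < a)%N && pos_assign d.
Proof.
apply/forallP/andP => [H|[Ha /forallP H] p].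
  split; first by have := H ord0; rewrite fcons0.
  by apply/forallP => j; have := H (lift ord0 j); rewrite fconsS.
by rewrite ffunE; case: unliftP => [j|] _ //.
Qed.

Lemma enum_map_fcons (X Y : finType) (T : Type) (t : X * Y * T) (s : maze X Y T) n
   (a : 'I_n.+1) (d : assign s n) (B : Type) (f : X * Y * T -> nat -> B) :
  [seq f (@pass _ _ _ (t :: s) p) (fcons a d p : nat) | p <- enum 'I_(size s).+1] =
  f t a :: [seq f (pass p) (d p : nat) | p <- enum 'I_(size s)].
Proof.
rewrite enum_ordSl /= pass0 fcons0; congr cons.
by rewrite -map_comp; apply: eq_map => j /=; rewrite passS fconsS.
Qed.

Set Implicit Arguments. Unset Strict Implicit. Unset Printing Implicit Defensive.

Definition Asum (R : comPzRingType) (n : nat) (X Y : finType)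
    (P : maze X Y R) (M : multation X Y) : R :=
  \sum_(d : assign P n | pos_assign d)
     (\prod_p plab p ^+ d p) *
     (let cm := dpow_prod [seq (pend p, (d p : nat)) | p <- enum 'I_(size P)] in
      if cm.2 == M then (cm.1)%:R else 0).

Lemma enum0 : enum 'I_0 = [::].
Proof. by apply: size0nil; rewrite size_enum_ord. Qed.

Lemma key (R : comPzRingType) (X Y : finType) (M M' : multation X Y) xy c a :
  (if [ffun z => (M' z + (if z == xy then a else 0))%N] == M
   then (c * 'C(M' xy + a, a))%:R else 0 :> R)
  = ('C(M xy, a))%:R * (if M' == msub M xy a then c%:R else 0).
Proof.
case: eqP => [<-|NE].
  have -> : M' == msub [ffun z => (M' z + (if z == xy then a else 0))%N] xy a.
    by apply/eqP/ffunP => z; rewrite !ffunE addnK.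
  by rewrite ffunE eqxx natrM mulrC.
case: eqP => [EM|]; last by rewrite mulr0.
case: (leqP a (M xy)) => Ha; last by rewrite bin_small ?mul0r.
exfalso; apply: NE; apply/ffunP => z; rewrite !ffunE EM ffunE.
case: eqP => [->|]; first by rewrite subnK.
by rewrite subn0 addn0.
Qed.

Lemma plab0 (X Y : finType) (T : Type) (t : X * Y * T) (s : maze X Y T) :
  @plab _ _ _ (t :: s) ord0 = t.2.
Proof. by rewrite /plab pass0. Qed.
Lemma plabS (X Y : finType) (T : Type) (t : X * Y * T) (s : maze X Y T) (j : 'I_(size s)) :
  @plab _ _ _ (t :: s) (lift ord0 j) = plab j.
Proof. by rewrite /plab passS. Qed.
Lemma pendS (X Y : finType) (T : Type) (t : X * Y * T) (s : maze X Y T) (j : 'I_(size s)) :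
  @pend _ _ _ (t :: s) (lift ord0 j) = pend j.
Proof. by rewrite /pend passS. Qed.
Lemma enum_pend_fcons (X Y : finType) (T : Type) (t : X * Y * T) (s : maze X Y T) n
   (a : 'I_n.+1) (d : assign s n) :
  [seq (@pend _ _ _ (t :: s) p, (fcons a d p : nat)) | p <- enum 'I_(size s).+1] =
  (t.1, (a : nat)) :: [seq (pend p, (d p : nat)) | p <- enum 'I_(size s)].
Proof.
rewrite enum_ordSl /= /pend pass0 fcons0; congr cons.
by rewrite -map_comp; apply: eq_map => j /=; rewrite passS fconsS.
Qed.

Lemma Asum_Bf (R : comPzRingType) n (X Y : finType) (s : maze X Y R) (M : multation X Y) :
  Asum n s M = Bf n s M.
Proof.
elim: s M => [|t s IH] M.
  rewrite /Asum big_mkcond (sum_ffun0 _ [ffun => ord0]) /=.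
  have -> : pos_assign ([ffun => ord0] : assign ([::] : maze X Y R) n).
    by apply/forallP => -[].
  rewrite big_ord0 mul1r enum0 /= eq_sym; by case: (M == _).
rewrite /Asum big_mkcond sum_ffunS /=.
under eq_bigr => a _ do under eq_bigr => d _ do
  rewrite pos_fcons big_ord_recl enum_pend_fcons plab0.
under eq_bigr => a _ do under eq_bigr => d _ do under eq_bigr => j _ do rewrite plabS fconsS.
rewrite [RHS]big_mkcond; apply: eq_bigr => a _.
case: (posnP a) => Ha.
  by rewrite big1 // => d _; rewrite Ha.
rewrite /= -IH /Asum big_distrr [RHS]big_mkcond; apply: eq_bigr => d _ /=.
case: (pos_assign d) => //.
rewrite fcons0; case: (dpow_prod _) => c M' /=.
by rewrite key -!mulrA; congr (_ * _); rewrite mulrCA.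
Qed.

Lemma ident_pos (R : comPzRingType) (bn : R -> nat -> R) (Htf : torsion_free R)
  (Hbn : binomial_fun bn) x n k : (0 < k)%N -> (k <= n)%N ->
  \sum_(a < n.+1 | (0 < a)%N) bn x a * (Sn k a)%:R = x ^+ k.
Proof.
move=> Hk Hkn; rewrite -(@ident R bn Htf Hbn x n k Hkn) [RHS]big_ord_recl big_mkcond big_ord_recl /=.
case: k Hk Hkn => // k _ _; rewrite mulr0 !add0r.
by apply: eq_bigr => i _.
Qed.

Lemma Imaze_fcons (R : comPzRingType) (X Y : finType) (t : X * Y * R) (s : maze X Y R) n
   (a : 'I_n.+1) (d : assign s n) :
  @Imaze _ _ _ (t :: s) n (fcons a d) = nseq a (t.1, 1) ++ Imaze d.
Proof.
rewrite /Imaze enum_ordSl /= /pend pass0 fcons0; congr (_ ++ _).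
by rewrite -map_comp; congr flatten; apply: eq_map => j /=; rewrite passS fconsS.
Qed.

Lemma ifsum (R : comPzRingType) (I : finType) (b : bool) (x : R) (F : I -> R) :
  (if b then x * \sum_i F i else 0) = \sum_i (if b then x * F i else 0).
Proof. by case: b; rewrite ?big_distrr // big1. Qed.

Lemma prod_tail (R : comPzRingType) (X Y : finType) (t : X * Y * R) (s : maze X Y R) n
   (a : 'I_n.+1) (d : assign s n) (F : R -> nat -> R) :
  \prod_(i < size s) F (@plab _ _ _ (t :: s) (lift ord0 i)) (fcons a d (lift ord0 i))
  = \prod_(i < size s) F (plab i) (d i).
Proof. by apply: eq_bigr => i _; rewrite plabS fconsS. Qed.

Lemma mainB (R : comPzRingType) (bn : R -> nat -> R) (Htf : torsion_free R)
  (Hbn : binomial_fun bn) n (X Y : finType) (s : maze X Y R) (M : multation X Y) :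
  (forall z, (M z <= n)%N) ->
  Bf n s M = \sum_(d : assign s n | pos_assign d)
     (\prod_p bn (plab p) (d p)) * Bf n (Imaze d) M.
Proof.
elim: s M => [|t s IH] M HM.
  rewrite big_mkcond (sum_ffun0 _ [ffun => ord0]) /=.
  have -> : pos_assign ([ffun => ord0] : assign ([::] : maze X Y R) n).
    by apply/forallP => -[].
  by rewrite big_ord0 mul1r /Imaze enum0.
rewrite [RHS]big_mkcond sum_ffunS.
under eq_bigr => a _ do under eq_bigr => d _ do
  rewrite pos_fcons big_ord_recl plab0 fcons0 Imaze_fcons (block _ _ _ HM) ifsum.
under eq_bigr => a _ do rewrite exchange_big.
rewrite exchange_big.
under eq_bigr => k _ do rewrite exchange_big.
rewrite /= big_mkcond; apply: eq_bigr => k _.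
case: (posnP k) => Hk.
  rewrite Hk /= big1 // => d _; rewrite big1 // => a _.
  case: ifP => // /andP[Ha _]; rewrite Sn_big // !mul0r mulr0 //.
rewrite (IH _ (msub_le _ _ HM)) big_distrr [LHS]big_mkcond /=.
apply: eq_bigr => d _; case: (pos_assign d); last first.
  by rewrite big1 // => a _; rewrite andbF.
rewrite -big_mkcond /= (eq_bigl (fun i : 'I_n.+1 => (0 < i)%N)); last by move=> i; rewrite andbT.
rewrite (eq_bigr (fun a : 'I_n.+1 => bn t.2 a * \prod_(i < size s) bn (plab i) (d i) *
   ((Sn k a)%:R * 'C(M t.1, k)%:R * Bf n (Imaze d) (msub M t.1 k)))); last first.
  by move=> a _; rewrite prod_tail.
set P := \prod_(i < size s) _.
transitivity (\sum_(a < n.+1 | (0 < a)%N) bn t.2 a * (Sn k a)%:R *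
   (P * 'C(M t.1, k)%:R * Bf n (Imaze d) (msub M t.1 k))); last first.
  apply: eq_bigr => a _; ring.
rewrite -big_distrl /= (@ident_pos _ _ Htf Hbn) //; last by have := ltn_ord k; lia.
ring.
Qed.

Set Implicit Arguments. Unset Strict Implicit. Unset Printing Implicit Defensive.

Lemma dpow_sum (X Y : finType) (l : seq (X * Y * nat)) :
  (\sum_z (dpow_prod l).2 z = sumn (map snd l))%N.
Proof.
elim: l => [|[xy d] l IH] /=.
  by rewrite big1 // => z _; rewrite ffunE.
rewrite /dpow_step; case: (dpow_prod l) IH => c M' /= IH.
under eq_bigr => z _ do rewrite ffunE.
rewrite big_split /= IH -big_mkcond big_pred1_eq addnC.
by [].
Qed.

Lemma sum_assign (X Y : finType) (T : Type) (P : maze X Y T) n (d : assign P n) :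
  sumn (map snd [seq (pend p, (d p : nat)) | p <- enum 'I_(size P)]) = (\sum_p (d p : nat))%N.
Proof. by rewrite -map_comp sumnE big_map big_enum. Qed.

Lemma size_Imaze (R : comPzRingType) (X Y : finType) (P : maze X Y R) n (d : assign P n) :
  size (Imaze d) = (\sum_p (d p : nat))%N.
Proof.
rewrite /Imaze size_flatten /shape -map_comp sumnE big_map big_enum.
by apply: eq_bigr => p _; rewrite /= size_nseq.
Qed.

Lemma part3 (R : comPzRingType) n (X Y : finType) (P : maze X Y R) (M : multation X Y) :
  (n < size P)%N -> Ariadne n P M = 0.
Proof.
move=> Hn; rewrite /Ariadne big1 // => d /andP[/forallP Hpos /eqP Hs].
exfalso; have : (size P <= \sum_p (d p : nat))%N.
  rewrite -[X in (X <= _)%N]card_ord -sum1_card; apply: leq_sum => p _; exact: Hpos.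
rewrite Hs; lia.
Qed.

Lemma Ariadne_Asum (R : comPzRingType) n (X Y : finType) (P : maze X Y R) (M : multation X Y) :
  Ariadne n P M = ((\sum_z M z)%N == n)%:R * Asum n P M.
Proof.
rewrite /Ariadne /Asum big_mkcondr big_distrr; apply: eq_bigr => d _ /=.
set c := dpow_prod _; case H: (c.2 == M); last by rewrite !mulr0 if_same.
move/eqP: H => H; rewrite -H dpow_sum sum_assign.
by case: ifP; rewrite ?mul1r ?mul0r.
Qed.

Theorem mainTheorem9 (R : comPzRingType) (bn : R -> nat -> R)
    (Htf : torsion_free R) (Hbn : binomial_fun bn) (n : nat) (X Y : finType) :
  (* (III) *)
  (forall P : maze X Y R, is_maze P -> (n < size P)%N ->
     forall M : multation X Y, Ariadne n P M = 0) /\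
  (* (IV), with the sum truncated to |I_d| <= n (the other terms are 0 by (III)) *)
  (forall P : maze X Y R, is_maze P ->
     forall M : multation X Y,
       Ariadne n P M =
       \sum_(d : assign P n | pos_assign d && (\sum_p (d p : nat) <= n)%N)
          (\prod_p bn (plab p) (d p)) * Ariadne n (Imaze d) M).
Proof.
split; first by move=> P _ Hn M; exact: part3.
move=> P _ M.
transitivity (\sum_(d : assign P n | pos_assign d)
   (\prod_p bn (plab p) (d p)) * Ariadne n (Imaze d) M); last first.
  rewrite big_mkcondr; apply: eq_bigr => d _.
  case: leqP => // H; rewrite part3 ?mulr0 // size_Imaze //.
under eq_bigr => d _ do rewrite Ariadne_Asum Asum_Bf.
rewrite Ariadne_Asum Asum_Bf.
case: eqP => E; last first.
  by rewrite mul0r big1 // => d _; rewrite mul0r mulr0.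
under eq_bigr => d _ do rewrite mul1r.
rewrite mul1r; apply: (@mainB _ _ Htf Hbn).
by move=> z; rewrite -E (bigD1 z) //= leq_addr.
Qed.
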